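(* Let $\alpha>2$ with $\alpha\notin\mathbb N$ and $\lfloor\alpha\rfloor=2m$ for some $m\in\mathbb N$, and let $k\in\mathbb N$. With \[ L(\lambda)=2\sum_{j=1}^m\Big(1+2\lambda\cos\frac{2j\pi}{\alpha}+\lambda^2\Big)^{\alpha k/2}+(1-\alpha)(1+\lambda)^{\alpha k}-\frac{\alpha\sin(\alpha\pi)}{\pi}\int_0^{1/\lambda}\frac{s^{\alpha-1}(1-\lambda s)^{\alpha k}}{s^{2\alpha}-2s^\alpha\cos(\alpha\pi)+1}\,ds, \] there exists $\lambda_0>0$ such that $L(\lambda)<0$ for all $\lambda\in(0,\lambda_0)$. *)

(* Defs.v *)
From Stdlib Require Import Reals.
From Coquelicot Require Import Coquelicot.
Open Scope R_scope.

(* Real power x^y for x > 0; extended by 0 for x <= 0 (only matters at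
   isolated points such as s = 0 or s = 1/lambda, irrelevant for integrals). *)
Definition rpow (x y : R) : R := if Rlt_dec 0 x then Rpower x y else 0.

Definition L_fun (alpha : R) (m k : nat) (lam : R) : R :=
  2 * sum_n_m (fun j : nat =>
        rpow (1 + 2 * lam * cos (2 * INR j * PI / alpha) + lam ^ 2)
             (alpha * INR k / 2)) 1 m
  + (1 - alpha) * rpow (1 + lam) (alpha * INR k)
  - alpha * sin (alpha * PI) / PI *
      RInt (fun s => rpow s (alpha - 1) * rpow (1 - lam * s) (alpha * INR k)
                     / (rpow s (2 * alpha) - 2 * rpow s alpha * cos (alpha * PI) + 1))
           0 (1 / lam).

(* Main.v *)
Require Import Defs.
From Stdlib Require Import Reals Lra Lia.
From Coquelicot Require Import Coquelicot.
Open Scope R_scope.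

Lemma rpow_pos x p : 0 < x -> rpow x p = Rpower x p.
Proof. intro H; unfold rpow; destruct (Rlt_dec 0 x); [reflexivity | lra]. Qed.
Lemma rpow_nonpos x p : x <= 0 -> rpow x p = 0.
Proof. intro H; unfold rpow; destruct (Rlt_dec 0 x); [lra | reflexivity]. Qed.
Lemma rpow_ge0 x p : 0 <= rpow x p.
Proof. unfold rpow; destruct (Rlt_dec 0 x); [unfold Rpower; left; apply exp_pos | lra]. Qed.

Lemma exp_le_mono x y : x <= y -> exp x <= exp y.
Proof. intro H; destruct H as [H|H]; [left; apply exp_increasing; auto | subst; lra]. Qed.

Lemma rpow_derive p (Hp : 1 < p) x : is_derive (fun y => rpow y p) x (p * rpow x (p-1)).
Proof.
  destruct (Rlt_dec 0 x) as [Hx|Hx].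
  - apply is_derive_ext_loc with (fun y => Rpower y p).
    + exists (mkposreal x Hx). intros y Hy.
      unfold ball in Hy; simpl in Hy; unfold AbsRing_ball, abs, minus, plus, opp in Hy; simpl in Hy.
      apply Rabs_lt_between' in Hy. rewrite rpow_pos; [reflexivity| lra].
    + rewrite rpow_pos by lra. apply is_derive_Reals, derivable_pt_lim_power; auto.
  - destruct (Rlt_dec x 0) as [Hx'|Hx'].
    + rewrite (rpow_nonpos x) by lra. rewrite Rmult_0_r.
      apply is_derive_ext_loc with (fun _ => 0).
      * exists (mkposreal (-x) ltac:(lra)). intros y Hy.
        unfold ball in Hy; simpl in Hy; unfold AbsRing_ball, abs, minus, plus, opp in Hy; simpl in Hy.
        apply Rabs_lt_between' in Hy. rewrite rpow_nonpos; [reflexivity| lra].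
      * apply (is_derive_const (0:R)).
    + assert (x = 0) by lra. subst x.
      rewrite (rpow_nonpos 0) by lra. rewrite Rmult_0_r.
      apply is_derive_Reals. intros eps Heps.
      assert (Hq : 0 < p - 1) by lra.
      assert (Hd : 0 < Rpower eps (/ (p-1))) by (unfold Rpower; apply exp_pos).
      exists (mkposreal _ Hd). intros h Hh0 Hh. simpl in Hh.
      rewrite Rplus_0_l, (rpow_nonpos 0) by lra.
      destruct (Rlt_dec 0 h) as [Hh1|Hh1].
      * rewrite rpow_pos by lra.
        replace (Rpower h p) with (Rpower h (p-1) * h).
        2:{ replace p with ((p-1) + 1) at 2 by ring. rewrite Rpower_plus, Rpower_1; auto. }
        replace ((Rpower h (p - 1) * h - 0) / h - 0) with (Rpower h (p-1)) by (field; lra).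
        rewrite Rabs_right by (left; unfold Rpower; apply exp_pos).
        rewrite Rabs_right in Hh by lra.
        replace eps with (Rpower (Rpower eps (/ (p-1))) (p-1)).
        2:{ rewrite Rpower_mult. replace (/ (p-1) * (p-1)) with 1 by (field; lra). apply Rpower_1; auto. }
        unfold Rpower at 1 3. apply exp_increasing. apply Rmult_lt_compat_l; auto.
        apply ln_increasing; auto.
      * rewrite rpow_nonpos by lra. replace ((0 - 0) / h - 0) with 0 by (field; auto).
        rewrite Rabs_R0; auto.
Qed.

Lemma rpow_cont p (Hp : 1 < p) x : continuous (fun y => rpow y p) x.
Proof. apply (ex_derive_continuous (K:=R_AbsRing) (V:=R_NormedModule)). eexists; apply rpow_derive; auto. Qed.

Lemma mvt_le f df a b M : a <= b ->
  (forall x, a <= x <= b -> is_derive f x (df x)) ->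
  (forall x, a <= x <= b -> df x <= M) -> f b - f a <= M * (b - a).
Proof.
  intros Hab Hd HM.
  destruct (MVT_gen f a b df) as [c [Hc Heq]].
  - intros x Hx. rewrite Rmin_left, Rmax_right in Hx by lra. apply Hd; lra.
  - intros x Hx. rewrite Rmin_left, Rmax_right in Hx by lra.
    apply continuity_pt_filterlim.
    apply (ex_derive_continuous (K:=R_AbsRing) (V:=R_NormedModule)).
    eexists; apply Hd; lra.
  - rewrite Rmin_left, Rmax_right in Hc by lra. rewrite Heq.
    apply Rmult_le_compat_r; [lra|]. apply HM; lra.
Qed.

Lemma atan_le_id x : 0 <= x -> atan x <= x.
Proof.
  intro Hx. rewrite <- (Rminus_0_r (atan x)), <- atan_0.
  replace x with (1 * (x - 0)) at 2 by ring.
  apply mvt_le with (df := fun y => / (1 + y²)); auto.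
  - intros y _. apply is_derive_atan.
  - intros y _. assert (0 <= y²) by (unfold Rsqr; nra).
    rewrite <- Rinv_1. apply Rinv_le_contravar; lra.
Qed.

Lemma sin_le_id x : 0 <= x -> sin x <= x.
Proof.
  intro Hx. rewrite <- (Rminus_0_r (sin x)), <- sin_0.
  replace x with (1 * (x - 0)) at 2 by ring.
  apply mvt_le with (df := cos); auto.
  - intros y _. apply is_derive_Reals, derivable_pt_lim_sin.
  - intros y _. apply COS_bound.
Qed.

Lemma cos_lb2 t : 0 <= t <= PI -> 1 - t^2/2 <= cos t.
Proof.
  intro Ht. replace t with (2 * (t/2)) at 2 by field. rewrite cos_2a_sin.
  assert (0 <= sin (t/2)) by (apply sin_ge_0; lra).
  assert (sin (t/2) <= t/2) by (apply sin_le_id; lra).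
  nra.
Qed.

Lemma PI_ub : PI <= 10/3.
Proof.
  assert (H := Machin_2_3).
  assert (atan (/2) <= /2) by (apply atan_le_id; lra).
  assert (atan (/3) <= /3) by (apply atan_le_id; lra).
  lra.
Qed.
Lemma PI_lb : 3 < PI.
Proof. assert (H := PI2_3_2). lra. Qed.

Lemma bernoulli p (Hp : 1 < p) y : 0 <= y <= 1 -> 1 - p * y <= rpow (1 - y) p.
Proof.
  intro Hy.
  assert (H := mvt_le (fun z => rpow z p) (fun z => p * rpow z (p-1)) (1-y) 1 p ltac:(lra)
     (fun z _ => rpow_derive p Hp z)).
  assert (H1 : rpow 1 p = 1) by (rewrite rpow_pos by lra; unfold Rpower; rewrite ln_1, Rmult_0_r; apply exp_0).
  cbv beta in H; rewrite H1 in H.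
  assert (1 - rpow (1 - y) p <= p * (1 - (1 - y))).
  { apply H. intros z Hz. enough (rpow z (p-1) <= 1) by nra.
    destruct (Rlt_dec 0 z).
    - rewrite rpow_pos by auto. unfold Rpower. apply Rle_trans with (exp 0); [apply exp_le_mono | rewrite exp_0; lra].
      assert (ln z <= 0) by (rewrite <- ln_1; apply ln_le; lra). nra.
    - rewrite rpow_nonpos by lra; lra. }
  lra.
Qed.

Lemma ln_le_x x : 0 < x -> ln x <= x - 1.
Proof.
  intro Hx. assert (H := exp_ineq1_le (ln x)). rewrite exp_ln in H; auto; lra.
Qed.

Lemma ln_ge x : 0 < x -> 1 - / x <= ln x.
Proof.
  intro Hx. assert (H := exp_ineq1_le (- ln x)). rewrite exp_Ropp, exp_ln in H; auto; lra.
Qed.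

Lemma exp_ub y : Rabs y <= /2 -> exp y <= 1 + y + 2 * y^2.
Proof.
  intro Hy. apply Rabs_le_between in Hy.
  assert (H := exp_ineq1_le (- y)). rewrite exp_Ropp in H.
  assert (He := exp_pos y).
  assert (exp y * (1 - y) <= 1).
  { apply Rmult_le_reg_r with (/ exp y). apply Rinv_0_lt_compat; auto.
    rewrite Rmult_comm, <- Rmult_assoc, Rinv_l, Rmult_1_l by lra. lra. }
  nra.
Qed.

Lemma rpow_up q x : 0 <= q -> Rabs x <= /2 -> Rabs (q * x) <= /2 ->
  rpow (1 + x) q <= 1 + q * x + 2 * (q * x)^2.
Proof.
  intros Hq Hx Hqx. assert (Hx' := proj1 (Rabs_le_between _ _) Hx).
  rewrite rpow_pos by lra. unfold Rpower.
  apply Rle_trans with (exp (q * x)); [| apply exp_ub; auto].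
  apply exp_le_mono. apply Rmult_le_compat_l; auto.
  assert (H := ln_le_x (1 + x) ltac:(lra)). lra.
Qed.

Lemma rpow_lo p l : 0 <= p -> 0 <= l -> 1 + p * l - p * l^2 <= rpow (1 + l) p.
Proof.
  intros Hp Hl. rewrite rpow_pos by lra. unfold Rpower.
  apply Rle_trans with (1 + p * ln (1 + l)); [| apply exp_ineq1_le].
  assert (H := ln_ge (1 + l) ltac:(lra)).
  assert (l - l^2 <= 1 - / (1 + l)).
  { replace (1 - / (1 + l)) with (l / (1 + l)) by (field; lra).
    apply Rmult_le_reg_r with (1 + l); [lra|].
    unfold Rdiv; rewrite Rmult_assoc, Rinv_l, Rmult_1_r by lra. nra. }
  nra.
Qed.

Definition Dd (a c s : R) := rpow s (2*a) - 2 * rpow s a * c + 1.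
Definition ff (a c s : R) := rpow s (a-1) / Dd a c s.

Lemma rpow_2a a s : rpow s (2*a) = rpow s a * rpow s a.
Proof.
  destruct (Rlt_dec 0 s).
  - rewrite !rpow_pos by auto. replace (2*a) with (a + a) by ring. apply Rpower_plus.
  - rewrite !rpow_nonpos by lra. ring.
Qed.

Lemma Dd_pos a c s : c^2 < 1 -> 0 < Dd a c s.
Proof. intro Hc. unfold Dd. rewrite rpow_2a. set (u := rpow s a). assert (H := pow2_ge_0 (u - c)). nra. Qed.

Lemma cont_plus (f g : R -> R) x : continuous f x -> continuous g x -> continuous (fun y => f y + g y) x.
Proof. intros. apply (continuous_plus f g); auto. Qed.
Lemma cont_mult (f g : R -> R) x : continuous f x -> continuous g x -> continuous (fun y => f y * g y) x.
Proof. intros. apply (continuous_mult f g); auto. Qed.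
Lemma cont_opp (f : R -> R) x : continuous f x -> continuous (fun y => - f y) x.
Proof. intros. apply (continuous_opp f); auto. Qed.
Lemma cont_minus (f g : R -> R) x : continuous f x -> continuous g x -> continuous (fun y => f y - g y) x.
Proof. intros. unfold Rminus. apply cont_plus; auto. apply cont_opp; auto. Qed.
Lemma cont_const (c x : R) : continuous (fun _ : R => c) x.
Proof. apply continuous_const. Qed.
Lemma cont_id (x : R) : continuous (fun y : R => y) x.
Proof. apply continuous_id. Qed.
Lemma cont_div (f g : R -> R) x : continuous f x -> continuous g x -> g x <> 0 -> continuous (fun y => f y / g y) x.
Proof. intros. unfold Rdiv. apply cont_mult; auto. apply continuous_Rinv_comp; auto. Qed.

Lemma Dd_cont a c s : 1 < a -> continuous (Dd a c) s.
Proof.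
  intro Ha. unfold Dd. apply cont_plus; [|apply cont_const].
  apply cont_minus.
  - apply rpow_cont; lra.
  - apply cont_mult; [|apply cont_const]. apply cont_mult; [apply cont_const|]. apply rpow_cont; lra.
Qed.

Lemma ff_cont a c s : 2 < a -> c^2 < 1 -> continuous (ff a c) s.
Proof.
  intros Ha Hc. unfold ff. apply cont_div.
  - apply rpow_cont; lra.
  - apply Dd_cont; lra.
  - apply Rgt_not_eq, Dd_pos; auto.
Qed.

Lemma ff_ge0 a c s : c^2 < 1 -> 0 <= ff a c s.
Proof. intro Hc. unfold ff. apply Rmult_le_pos. apply rpow_ge0. left; apply Rinv_0_lt_compat, Dd_pos; auto. Qed.

Lemma J_formula a c s X : 2 < a -> 0 < s -> s^2 + c^2 = 1 -> 0 <= X ->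
  RInt (ff a c) 0 X = (atan ((rpow X a - c)/s) + atan (c/s)) / (a*s).
Proof.
  intros Ha Hs Hsc HX.
  assert (Hc : c^2 < 1) by nra.
  set (G := fun u => atan ((u - c)/s) / (a*s)).
  assert (HG : forall u, is_derive G u (/(a*s) * (/s * / (1 + ((u-c)/s)^2)))).
  { intro u. unfold G. auto_derive. auto. field.
    assert (H := pow2_ge_0 ((u-c)/s)). repeat split; try lra.
    assert (H1 := pow2_ge_0 (u-c)). assert (0 < s^2) by (apply pow_lt; auto). lra. }
  assert (HF : forall x, is_derive (fun y => G (rpow y a)) x (ff a c x)).
  { intro x. assert (H := is_derive_comp G (fun y => rpow y a) x _ _ (HG (rpow x a)) (rpow_derive a ltac:(lra) x)).
    replace (ff a c x) with (scal (a * rpow x (a - 1)) (/ (a * s) * (/ s * / (1 + ((rpow x a - c) / s) ^ 2)))); auto.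
    unfold scal; simpl; unfold mult; simpl.
    unfold ff, Dd. rewrite rpow_2a. set (u := rpow x a). set (r := rpow x (a-1)).
    assert (E : 1 + ((u - c)/s)^2 = (u*u - 2*u*c + 1)/s^2).
    { replace (u*u - 2*u*c + 1) with (s^2 + (u-c)^2).
      - field. lra.
      - replace (s^2) with (1 - c^2) by lra. ring. }
    replace (1 + (u - c) / s * ((u - c) / s * 1)) with (1 + ((u-c)/s)^2) by ring. rewrite E. assert (Hd := Dd_pos a c x Hc). unfold Dd in Hd. rewrite rpow_2a in Hd. fold u in Hd.
    field. split; lra. }
  apply is_RInt_unique.
  replace ((atan ((rpow X a - c) / s) + atan (c / s)) / (a * s)) with
    (minus (G (rpow X a)) (G (rpow 0 a))).
  - apply (is_RInt_derive (fun y => G (rpow y a)) (ff a c)).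
    + intros x _. apply HF.
    + intros x _. apply ff_cont; auto.
  - unfold minus, plus, opp; simpl. unfold G. rewrite (rpow_nonpos 0) by lra.
    replace ((0 - c)/s) with (- (c/s)) by (field; lra). rewrite atan_opp. field. lra.
Qed.

Lemma RInt_scalR (f : R -> R) k a b : ex_RInt f a b -> RInt (fun x => k * f x) a b = k * RInt f a b.
Proof. intro H. exact (RInt_scal (V:=R_CompleteNormedModule) f a b k H). Qed.

Lemma exR (f : R -> R) a b : (forall z, Rmin a b <= z <= Rmax a b -> continuous f z) -> ex_RInt f a b.
Proof. apply (ex_RInt_continuous (V:=R_CompleteNormedModule)). Qed.

Lemma rpow_a_lb a x : 2 < a -> 2 <= x -> x^2 * (a/2) <= rpow x a.
Proof.
  intros Ha Hx. rewrite rpow_pos by lra.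
  replace a with (INR 2 + (a - 2)) at 2 by (simpl; ring).
  rewrite Rpower_plus, Rpower_pow by lra.
  apply Rmult_le_compat_l; [apply pow_le; lra|].
  unfold Rpower.
  apply Rle_trans with (exp ((a-2) * ln 2)).
  - apply Rle_trans with (1 + (a-2) * ln 2); [|apply exp_ineq1_le].
    assert (H := ln_lt_2). nra.
  - apply exp_le_mono. apply Rmult_le_compat_l; [lra|]. apply ln_le; lra.
Qed.

Lemma tail_pt a c x : 2 < a -> c^2 < 1 -> 2 <= x -> x * ff a c x <= 32/(9*a) / (x*x).
Proof.
  intros Ha Hc Hx.
  assert (Hu := rpow_a_lb a x Ha Hx).
  assert (Hxr : x * rpow x (a-1) = rpow x a).
  { rewrite !rpow_pos by lra. replace a with ((a-1) + 1) at 2 by ring.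
    rewrite Rpower_plus, Rpower_1 by lra. ring. }
  assert (HD := Dd_pos a c x Hc).
  assert (Hc1 : c <= 1) by nra.
  unfold ff. replace (x * (rpow x (a - 1) / Dd a c x)) with (rpow x a / Dd a c x)
    by (rewrite <- Hxr; field; lra).
  unfold Dd in *. rewrite rpow_2a in *. set (u := rpow x a) in *.
  assert (Hu4 : 4 <= u) by nra.
  assert (HD2 : 9/16 * (u*u) <= u * u - 2 * u * c + 1) by nra.
  apply Rmult_le_reg_r with ((u * u - 2 * u * c + 1) * (x*x)). nra.
  replace (u / (u * u - 2 * u * c + 1) * ((u * u - 2 * u * c + 1) * (x * x))) with (u * (x*x)) by (field; lra).
  replace (32 / (9 * a) / (x * x) * ((u * u - 2 * u * c + 1) * (x * x))) with (32 / (9*a) * (u * u - 2 * u * c + 1)) by (field; split; lra).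
  apply Rle_trans with (32/(9*a) * (9/16 * (u*u))).
  - replace (32 / (9 * a) * (9 / 16 * (u * u))) with (2 * u * u / a) by (field; lra).
    apply Rmult_le_reg_r with a; [lra|].
    replace (2 * u * u / a * a) with (2*u*u) by (field; lra). nra.
  - apply Rmult_le_compat_l; [|lra]. apply Rlt_le, Rdiv_lt_0_compat; lra.
Qed.

Lemma xff_cont a c x : 2 < a -> c^2 < 1 -> continuous (fun y => y * ff a c y) x.
Proof. intros. apply cont_mult; [apply cont_id | apply ff_cont; auto]. Qed.

Lemma K_bound a c s X : 2 < a -> 0 < s -> s^2 + c^2 = 1 -> 2 <= X ->
  RInt (fun x => x * ff a c x) 0 X <= 2 * ((PI/2 + atan (c/s)) / (a*s)) + 16/(9*a).
Proof.
  intros Ha Hs Hsc HX. assert (Hc : c^2 < 1) by nra.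
  assert (E1 : ex_RInt (fun x => x * ff a c x) 0 2) by (apply exR; intros; apply xff_cont; auto).
  assert (E2 : ex_RInt (fun x => x * ff a c x) 2 X) by (apply exR; intros; apply xff_cont; auto).
  rewrite <- (RInt_Chasles _ 0 2 X E1 E2). unfold plus; simpl.
  apply Rplus_le_compat.
  - apply Rle_trans with (RInt (fun x => 2 * ff a c x) 0 2).
    + apply RInt_le; [lra | auto | |].
      * apply exR; intros. apply cont_mult; [apply cont_const|apply ff_cont; auto].
      * intros x Hx.
        apply Rmult_le_compat_r; [apply ff_ge0; auto | lra].
    + rewrite RInt_scalR by (apply exR; intros; apply ff_cont; auto).
      rewrite (J_formula a c s 2) by (auto; lra).
      apply Rmult_le_compat_l; [lra|].
      unfold Rdiv. apply Rmult_le_compat_r; [left; apply Rinv_0_lt_compat; nra|].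
      assert (H := atan_bound ((rpow 2 a - c) / s)). lra.
  - set (K := 32/(9*a)).
    apply Rle_trans with (RInt (fun x => K / (x*x)) 2 X).
    + apply RInt_le; [lra | auto | |].
      * apply exR; intros z Hz. rewrite Rmin_left, Rmax_right in Hz by lra.
        apply cont_div; [apply cont_const | apply cont_mult; apply cont_id|]. nra.
      * intros x Hx. apply tail_pt; auto; lra.
    + rewrite (is_RInt_unique (fun x => K / (x*x)) 2 X (minus ((fun y => - K / y) X) ((fun y => - K / y) 2))).
      * unfold minus, plus, opp; simpl.
        assert (0 < K) by (unfold K; apply Rdiv_lt_0_compat; lra).
        assert (K / X >= 0) by (apply Rle_ge, Rlt_le, Rdiv_lt_0_compat; lra).
        replace (16/(9*a)) with (K/2) by (unfold K; field; lra). lra.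
      * apply (is_RInt_derive (fun y => - K / y) (fun x => K / (x*x))).
        -- intros x Hx. rewrite Rmin_left, Rmax_right in Hx by lra.
           auto_derive. lra. field. lra.
        -- intros z Hz. rewrite Rmin_left, Rmax_right in Hz by lra.
           apply cont_div; [apply cont_const | apply cont_mult; apply cont_id|]. nra.
Qed.

Lemma RInt_minusR (f g : R -> R) a b : ex_RInt f a b -> ex_RInt g a b ->
  RInt (fun x => f x - g x) a b = RInt f a b - RInt g a b.
Proof. intros H1 H2. exact (RInt_minus (V:=R_CompleteNormedModule) f g a b H1 H2). Qed.

Lemma term_bound q l cj : 0 <= q -> 0 < l -> 6*(q+1)*l <= 1 -> -1 <= cj <= 1 ->
  rpow (1 + 2*l*cj + l^2) q <= 1 + 2*q*l*cj + (q + 18*q^2)*l^2.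
Proof.
  intros Hq Hl Hql Hc.
  assert (Hx : Rabs (2*l*cj + l^2) <= 3*l).
  { apply Rabs_le. split; nra. }
  replace (1 + 2*l*cj + l^2) with (1 + (2*l*cj + l^2)) by ring.
  assert (Hqx : Rabs (q * (2*l*cj + l^2)) <= 3*q*l).
  { rewrite Rabs_mult, Rabs_pos_eq by auto. nra. }
  eapply Rle_trans; [apply rpow_up; auto; nra|].
  assert (Hsq : (q * (2 * l * cj + l ^ 2))^2 <= 9*q^2*l^2).
  { apply Rabs_le_between in Hqx. set (y := q * (2 * l * cj + l ^ 2)) in *.
    assert (0 <= (3*q*l - y) * (3*q*l + y)) by (apply Rmult_le_pos; lra). nra. }
  nra.
Qed.

Lemma sum_bound (t cc : nat -> R) A B n : (forall j, t j <= 1 + A * cc j + B) ->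
  sum_n_m t 1 n <= INR n + A * sum_n_m cc 1 n + INR n * B.
Proof.
  intro H. induction n.
  - rewrite !sum_n_m_zero by lia. simpl. unfold zero; simpl. lra.
  - rewrite !sum_n_Sm by lia. rewrite S_INR. unfold plus; simpl.
    specialize (H (S n)). nra.
Qed.

Lemma sum_cos_bound (cc : nat -> R) n : (forall j, cc j <= 1) ->
  sum_n_m cc 1 (S n) <= INR n + cc (S n).
Proof.
  intro H. rewrite sum_n_Sm by lia. unfold plus; simpl. apply Rplus_le_compat_r.
  induction n.
  - rewrite sum_n_m_zero by lia. simpl. unfold zero; simpl. lra.
  - rewrite sum_n_Sm by lia. rewrite S_INR. unfold plus; simpl. specialize (H (S n)). lra.
Qed.

Lemma I_lower a c s p lam : 2 < a -> 0 < s -> s^2 + c^2 = 1 -> 1 < p -> 0 < lam ->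
  RInt (ff a c) 0 (1/lam) - p*lam * RInt (fun x => x * ff a c x) 0 (1/lam) <=
  RInt (fun t => rpow t (a-1) * rpow (1 - lam*t) p / (rpow t (2*a) - 2 * rpow t a * c + 1)) 0 (1/lam).
Proof.
  intros Ha Hs Hsc Hp Hl. assert (Hc : c^2 < 1) by nra.
  assert (HX : 0 < 1/lam) by (apply Rdiv_lt_0_compat; lra).
  assert (E1 : ex_RInt (ff a c) 0 (1/lam)) by (apply exR; intros; apply ff_cont; auto).
  assert (E2 : ex_RInt (fun x => x * ff a c x) 0 (1/lam)) by (apply exR; intros; apply xff_cont; auto).
  rewrite <- RInt_scalR, <- RInt_minusR; auto.
  2:{ apply ex_RInt_scal with (f := fun x => x * ff a c x). auto. }
  apply RInt_le; [lra | | |].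
  - apply (ex_RInt_minus (V:=R_CompleteNormedModule)); auto.
    apply (ex_RInt_scal (V:=R_CompleteNormedModule)) with (f := fun x => x * ff a c x). auto.
  - apply exR. intros z _. apply cont_div.
    + apply cont_mult; [apply rpow_cont; lra|].
      apply (continuous_comp (fun t => 1 - lam * t) (fun y => rpow y p)).
      * apply cont_minus; [apply cont_const|]. apply cont_mult; [apply cont_const|apply cont_id].
      * apply rpow_cont; auto.
    + apply (Dd_cont a c z). lra.
    + apply Rgt_not_eq, (Dd_pos a c z Hc).
  - intros x Hx.
    assert (Hy : 0 <= lam * x <= 1).
    { split; [nra|]. apply Rmult_le_reg_r with (/lam). apply Rinv_0_lt_compat; auto.
      replace (lam * x * / lam) with x by (field; lra). unfold Rdiv in Hx. lra. }
    assert (Hb := bernoulli p Hp (lam*x) Hy).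
    assert (Hf := ff_ge0 a c x Hc). unfold ff, Dd in Hf.
    fold (Dd a c x). unfold ff.
    replace (rpow x (a - 1) * rpow (1 - lam * x) p / Dd a c x) with
      (rpow x (a - 1) / Dd a c x * rpow (1 - lam * x) p) by (field; apply Rgt_not_eq, Dd_pos; auto).
    fold (Dd a c x) in Hf.
    replace (rpow x (a - 1) / Dd a c x - p * lam * (x * (rpow x (a - 1) / Dd a c x))) with
      (rpow x (a - 1) / Dd a c x * (1 - p * (lam * x))) by ring.
    apply Rmult_le_compat_l; auto.
Qed.

Lemma trig_key a (m : nat) : 2 * INR m < a < 2 * INR m + 1 ->
  0 < sin (a * PI) /\ atan (cos (a * PI) / sin (a * PI)) = PI * (2 * INR m + 1 - a) - PI/2.
Proof.
  intro Ha. assert (HP := PI_RGT_0).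
  set (t0 := PI * (a - 2 * INR m)).
  assert (Ht0 : 0 < t0 < PI) by (unfold t0; split; nra).
  assert (E : a * PI = t0 + 2 * INR m * PI) by (unfold t0; ring).
  rewrite E, sin_period, cos_period.
  split; [apply sin_gt_0; lra|].
  replace (cos t0 / sin t0) with (tan (PI/2 - t0)) by (unfold tan; rewrite sin_shift, cos_shift; reflexivity).
  rewrite atan_tan by lra. unfold t0. lra.
Qed.

Lemma gamma_bound a (m : nat) : 2 * INR m < a < 2 * INR m + 1 -> 2 < a ->
  cos (2 * INR m * PI / a) <= -1 + (a - 2 * INR m)^2 * PI^2 / 8.
Proof.
  intros Ha Ha2. assert (HP := PI_RGT_0).
  set (t := PI * (a - 2 * INR m) / a).
  assert (E : 2 * INR m * PI / a = PI - t) by (unfold t; field; lra).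
  rewrite E, Rtrigo_facts.cos_pi_minus.
  assert (Ht0 : 0 <= t) by (unfold t; apply Rmult_le_pos; [nra | left; apply Rinv_0_lt_compat; lra]).
  assert (Ht1 : t <= PI * (a - 2 * INR m) / 2).
  { unfold t, Rdiv. apply Rmult_le_compat_l; [nra|]. apply Rinv_le_contravar; lra. }
  assert (Ht2 : t <= PI) by nra.
  assert (H := cos_lb2 t (conj Ht0 Ht2)).
  assert (t^2 <= (PI * (a - 2 * INR m) / 2)^2) by (apply pow_incr; lra).
  nra.
Qed.

Theorem lemma6p5 (alpha : R) (m k : nat)
  (Halpha : 2 < alpha)
  (Hnotnat : forall n : nat, alpha <> INR n)
  (Hfloor : IZR (Int_part alpha) = INR (2 * m))
  (Hk : (1 <= k)%nat) :
  exists lam0 : R, 0 < lam0 /\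
    forall lam : R, 0 < lam < lam0 -> L_fun alpha m k lam < 0.
Proof.
  assert (Hb := base_Int_part alpha). rewrite Hfloor in Hb.
  assert (Hne := Hnotnat (2*m)%nat).
  rewrite mult_INR in Hb, Hne. replace (INR 2) with 2 in Hb, Hne by (simpl; ring).
  assert (Ham : 2 * INR m < alpha < 2 * INR m + 1).
  { destruct Hb as [Hb1 Hb2]. split; [|lra]. destruct Hb1; auto. congruence. }
  clear Hb Hne Hfloor.
  destruct m as [|m'].
  { simpl in Ham. lra. }
  assert (HP := PI_RGT_0). assert (HPl := PI_lb). assert (HPu := PI_ub).
  destruct (trig_key alpha (S m') Ham) as [Hs Hat].
  assert (Hsc : sin (alpha*PI)^2 + cos (alpha*PI)^2 = 1)
    by (rewrite <- !Rsqr_pow2; apply sin2_cos2).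
  assert (HG := gamma_bound alpha (S m') Ham Halpha).
  set (c := cos (alpha*PI)) in *. set (s := sin (alpha*PI)) in *.
  assert (Hs1 : s <= 1) by apply SIN_bound.
  assert (Hk1 : 1 <= INR k) by (apply (le_INR 1); lia).
  set (q := alpha * INR k / 2).
  set (p := alpha * INR k).
  assert (Hpq : p = 2 * q) by (unfold p, q; field).
  assert (Hp : 2 < p) by (unfold p; nra).
  set (E := q + 18 * q^2).
  assert (HE : 0 <= E) by (unfold E; nra).
  set (C2 := 2 * INR (S m') * E + (alpha - 1) * p + 1).
  assert (Hm0 : 0 <= INR (S m')) by apply pos_INR.
  assert (HC2 : 0 < C2) by (unfold C2; nra).
  exists (Rmin (Rmin (1/2) (1/(6*(q+1)))) (p/(3*C2))).
  split.
  { apply Rmin_glb_lt; [apply Rmin_glb_lt|]; apply Rdiv_lt_0_compat; nra. }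
  intros lam [Hl0 Hl1].
  assert (Hlh : lam <= 1/2).
  { eapply Rle_trans; [left; apply Hl1|]. eapply Rle_trans; apply Rmin_l. }
  assert (Hlq : 6*(q+1)*lam <= 1).
  { assert (lam <= 1/(6*(q+1))).
    { eapply Rle_trans; [left; apply Hl1|]. eapply Rle_trans; [apply Rmin_l|apply Rmin_r]. }
    apply Rmult_le_reg_r with (/(6*(q+1))). apply Rinv_0_lt_compat; nra.
    replace (6 * (q + 1) * lam * / (6 * (q + 1))) with lam by (field; nra). lra. }
  assert (HlC : lam * (3 * C2) < p).
  { assert (lam < p/(3*C2)) by (eapply Rlt_le_trans; [apply Hl1| apply Rmin_r]).
    apply Rmult_lt_reg_r with (/(3*C2)). apply Rinv_0_lt_compat; nra.
    replace (lam * (3 * C2) * / (3 * C2)) with lam by (field; nra). lra. }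
  unfold L_fun. fold c s q p.
  set (cj := fun j : nat => cos (2 * INR j * PI / alpha)).
  assert (HS1 : sum_n_m (fun j => rpow (1 + 2 * lam * cos (2 * INR j * PI / alpha) + lam ^ 2) q) 1 (S m')
     <= INR (S m') + (2*q*lam) * sum_n_m cj 1 (S m') + INR (S m') * (E * lam^2)).
  { apply sum_bound. intro j. eapply Rle_trans; [apply term_bound; auto; try nra; apply COS_bound|].
    unfold cj, E. right; ring. }
  assert (HS2 : sum_n_m cj 1 (S m') <= INR m' + cj (S m')).
  { apply sum_cos_bound. intro j; apply COS_bound. }
  unfold cj in HS2 at 2.
  set (SS := sum_n_m (fun j => rpow (1 + 2 * lam * cos (2 * INR j * PI / alpha) + lam ^ 2) q) 1 (S m')) in *.
  set (Sc := sum_n_m cj 1 (S m')) in *.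
  set (gam := cos (2 * INR (S m') * PI / alpha)) in *.
  set (I := RInt (fun s0 : R => rpow s0 (alpha - 1) * rpow (1 - lam * s0) p /
     (rpow s0 (2 * alpha) - 2 * rpow s0 alpha * c + 1)) 0 (1 / lam)).
  assert (HPw := rpow_lo p lam ltac:(lra) ltac:(lra)).
  assert (HI : RInt (ff alpha c) 0 (1/lam) - p*lam*RInt (fun x => x * ff alpha c x) 0 (1/lam) <= I)
    by (apply (I_lower alpha c s p lam); auto; lra).
  assert (HX : 2 <= 1/lam).
  { apply Rmult_le_reg_r with lam; auto. replace (1/lam*lam) with 1 by (field; lra). lra. }
  assert (HJ := J_formula alpha c s (1/lam) Halpha Hs Hsc ltac:(lra)).
  assert (HK := K_bound alpha c s (1/lam) Halpha Hs Hsc HX).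
  set (X := 1/lam) in *.
  set (Y := (rpow X alpha - c) / s).
  assert (HY : PI/2 - 2 * lam^2 <= atan Y).
  { assert (Hu := rpow_a_lb alpha X Halpha HX).
    assert (Hc1 : c <= 1) by nra.
    assert (HX2 : X^2 = /lam^2) by (unfold X; field; lra).
    assert (HY1 : / (2*lam^2) <= Y).
    { unfold Y. apply Rle_trans with (rpow X alpha - c).
      - assert (/ (2 * lam^2) <= X^2 - 1).
        { rewrite HX2. assert (0 < lam^2) by nra.
          replace (/lam^2 - 1) with ((1 - lam^2)/lam^2) by (field; lra).
          replace (/(2*lam^2)) with ((1/2)/lam^2) by (field; lra).
          unfold Rdiv. apply Rmult_le_compat_r; [left; apply Rinv_0_lt_compat; auto | nra]. }
        nra.
      - assert (0 < rpow X alpha - c) by nra.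
        unfold Rdiv. rewrite <- (Rmult_1_r (rpow X alpha - c)) at 1.
        apply Rmult_le_compat_l; [lra|]. rewrite <- Rinv_1. apply Rinv_le_contravar; lra. }
    assert (HY0 : 0 < Y). { eapply Rlt_le_trans; [|apply HY1]. apply Rinv_0_lt_compat; nra. }
    assert (HiY : / Y <= 2 * lam^2).
    { replace (2*lam^2) with (/ / (2*lam^2)) by (field; lra). apply Rinv_le_contravar; auto.
      apply Rinv_0_lt_compat; nra. }
    assert (Hat2 := atan_inv (/ Y) ltac:(apply Rinv_0_lt_compat; auto)).
    rewrite Rinv_inv in Hat2.
    assert (atan (/ Y) <= / Y) by (apply atan_le_id; left; apply Rinv_0_lt_compat; auto).
    lra. }
  set (beta := 2 * INR (S m') + 1 - alpha) in *.
  set (A := alpha * s / PI).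
  assert (HA : 0 < A) by (unfold A; apply Rdiv_lt_0_compat; nra).
  set (J := RInt (ff alpha c) 0 X) in *.
  set (K := RInt (fun x => x * ff alpha c x) 0 X) in *.
  assert (HAJ : beta - lam^2 <= A * J).
  { rewrite HJ. unfold A. fold Y.
    replace (alpha * s / PI * ((atan Y + atan (c / s)) / (alpha * s))) with ((atan Y + atan (c/s)) / PI)
      by (field; split; lra).
    rewrite Hat.
    apply Rmult_le_reg_r with PI; auto.
    replace ((atan Y + (PI * beta - PI / 2)) / PI * PI) with (atan Y + (PI * beta - PI / 2)) by (field; lra).
    assert (lam^2 * PI >= 2 * lam^2) by nra. nra. }
  assert (HAK : A * K <= 2 * beta + 16/27).
  { apply Rle_trans with (A * (2 * ((PI / 2 + atan (c / s)) / (alpha * s)) + 16 / (9 * alpha))).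
    - apply Rmult_le_compat_l; lra.
    - rewrite Hat. unfold A.
      replace (alpha * s / PI * (2 * ((PI / 2 + (PI * beta - PI / 2)) / (alpha * s)) + 16 / (9 * alpha)))
        with (2 * beta + 16 * s / (9 * PI)) by (field; repeat split; lra).
      apply Rplus_le_compat_l.
      apply Rmult_le_reg_r with (9*PI); [lra|].
      replace (16 * s / (9 * PI) * (9 * PI)) with (16 * s) by (field; lra). nra. }
  assert (HAI : beta - lam^2 - p*lam*(2*beta + 16/27) <= A * I).
  { apply Rle_trans with (A * (J - p * lam * K)).
    - assert (0 <= p*lam) by nra.
      assert (p*lam*(A*K) <= p*lam*(2*beta+16/27)) by (apply Rmult_le_compat_l; auto).
      nra.
    - apply Rmult_le_compat_l; lra. }
  assert (HSm : INR (S m') = INR m' + 1) by apply S_INR.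
  assert (Hbeta : 0 < beta < 1) by (unfold beta; lra).
  assert (Hgam : gam <= -1 + (1 - beta)^2 * PI^2 / 8).
  { replace (1 - beta) with (alpha - 2 * INR (S m')) by (unfold beta; ring). auto. }
  assert (Hbr : 2 * INR m' + 2 * gam + 1 - alpha + 2 * beta + 16/27 <= -1/3).
  { assert (HPI2 : PI^2 <= 100/9) by nra.
    assert (H1b : 0 <= (1-beta)^2) by nra.
    assert ((1 - beta)^2 * PI^2 <= (1-beta)^2 * (100/9)) by (apply Rmult_le_compat_l; auto).
    unfold beta in *. nra. }
  assert (Hpl : 0 <= p * lam) by nra.
  assert (H1 : p * lam * Sc <= p * lam * (INR m' + gam)) by (apply Rmult_le_compat_l; lra).
  assert (H2 : (1 - alpha) * rpow (1 + lam) p <= (1 - alpha) * (1 + p*lam - p*lam^2)).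
  { apply Rmult_le_compat_neg_l; lra. }
  assert (H3 : p * lam * (2 * INR m' + 2 * gam + 1 - alpha + 2 * beta + 16/27) <= p * lam * (-1/3))
    by (apply Rmult_le_compat_l; auto).
  assert (H4 : C2 * lam^2 < p * lam / 3) by nra.
  assert (HSS : SS <= INR (S m') + p * lam * Sc + INR (S m') * (E * lam^2)).
  { rewrite Hpq. replace (2 * q * lam * Sc) with (2 * q * lam * Sc) in HS1 by ring. nra. }
  unfold C2 in H4. unfold beta in *.
  nra.
Qed.
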